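(* Let $k$ be a number field, $\mathcal G$ a finite group, $H$ a finite abelian group, $\mu:\mathcal G\to\mathrm{Aut}(H)$ an action, and $\tau\in H$. Then $G_{k,\mu,\tau}$ is a subgroup of $\mathrm{Gal}(k(\zeta_{o(\tau)})/k)$.
   Context: $o(\tau)$ is the order of $\tau$ and $\zeta_t$ a primitive $t$-th root of unity. $\nu_{k,\tau}:\mathrm{Gal}(k(\zeta_{o(\tau)})/k)\to(\mathbb Z/o(\tau))^*$ is given by $g(\zeta_{o(\tau)})=\zeta_{o(\tau)}^{\nu_{k,\tau}(g)}$, and $G_{k,\mu,\tau}=\{g\in\mathrm{Gal}(k(\zeta_{o(\tau)})/k):\exists g_1\in\mathcal G,\ \mu(g_1)(\tau)=\tau^{\nu_{k,\tau}(g)}\}$. *)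

(* Defs.v *)
From HB Require Import structures.
From mathcomp Require Import all_boot all_order all_algebra all_fingroup all_solvable all_field.
Set Implicit Arguments. Unset Strict Implicit. Unset Printing Implicit Defensive.
Import GRing.Theory.
Local Open Scope ring_scope.

(* nu_{k,tau}(g): the exponent m (taken in 0 <= m < n) with g(zeta) = zeta^m,
   where zeta is a fixed primitive n-th root of unity, n = o(tau). *)
Definition nu_exp (L : splittingFieldType rat) (E : {subfield L}) (n : nat)
    (z : L) (g : gal_of E) : nat :=
  if [pick m : 'I_n | g z == z ^+ m] is Some m then val m else 0%N.

Definition G_kmutau (L : splittingFieldType rat) (k : {subfield L}) (z : L)
    (gT hT : finGroupType) (G : {group gT}) (mu : {morphism G >-> {perm hT}})
    (tau : hT) : {set gal_of <<k; z>>%VS} :=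
  [set g in ('Gal(<<k; z>>%VS / k))%g |
     [exists g1 in G, (mu g1 tau == tau ^+ nu_exp #[tau]%g z g)%g]].

(* Main.v *)
Require Import Defs.
From HB Require Import structures.
From mathcomp Require Import all_boot all_order all_algebra all_fingroup all_solvable all_field.
Import GRing.Theory.
Local Open Scope ring_scope.

Lemma nu_spec (L : splittingFieldType rat) (E : {subfield L}) (n : nat) (z : L)
  (g : gal_of E) : n.-primitive_root z -> g z = z ^+ nu_exp n z g.
Proof.
move=> pz.
have h : (g z) ^+ n = 1 by rewrite -rmorphXn (prim_expr_order pz) rmorph1.
have [i Hi] := prim_rootP pz h.
rewrite /nu_exp; case: pickP => [m /eqP -> // | H].
by have := H i; rewrite Hi eqxx.
Qed.

Lemma tau_nu (L : splittingFieldType rat) (E : {subfield L}) (hT : finGroupType)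
  (tau : hT) (z : L) (g : gal_of E) a :
  (#[tau]%g).-primitive_root z -> g z = z ^+ a ->
  (tau ^+ nu_exp #[tau]%g z g = tau ^+ a)%g.
Proof.
move=> pz ga; apply/eqP; rewrite eq_expg_mod_order -(eq_prim_root_expr pz).
by rewrite -nu_spec // ga.
Qed.

Lemma aut_expg (hT : finGroupType) (H : {group hT}) (p : {perm hT}) (t : hT) m :
  p \in Aut H -> t \in H -> p (t ^+ m)%g = (p t ^+ m)%g.
Proof.
move=> Hp tH; rewrite -(autmE Hp).
by rewrite (morphX (autm_morphism Hp)).
Qed.

Theorem mainTheorem16 (L : splittingFieldType rat) (k : {subfield L})
    (gT hT : finGroupType) (G : {group gT}) (H : {group hT})
    (mu : {morphism G >-> {perm hT}}) (tau : hT) (z : L) :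
  abelian H -> (mu @* G \subset Aut H)%g -> tau \in H ->
  (#[tau]%g).-primitive_root z ->
  (G_kmutau k z mu tau \subset 'Gal(<<k; z>>%VS / k)%g) &&
  group_set (G_kmutau k z mu tau).
Proof.
move=> _ sGA tH pz; apply/andP; split.
  by apply/subsetP => g; rewrite inE => /andP[].
apply/group_setP; split.
  rewrite inE group1 /=; apply/existsP; exists 1%g; rewrite group1 morph1 perm1 /=.
  rewrite (@tau_nu _ _ _ tau z 1%g 1%N) //; last by rewrite gal_id expr1.
move=> x y; rewrite !inE => /andP[xG /existsP[g1 /andP[g1G /eqP e1]]].
move=> /andP[yG /existsP[h1 /andP[h1G /eqP e2]]].
rewrite groupM //=; apply/existsP; exists (g1 * h1)%g; rewrite groupM //=.
have zE : z \in <<k; z>>%VS by apply: memv_adjoin.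
rewrite (@tau_nu _ _ _ tau z _ (nu_exp #[tau]%g z y * nu_exp #[tau]%g z x)%N) //;
  last first.
    rewrite galM // (@nu_spec _ _ _ _ x pz) rmorphXn exprM.
    by rewrite -(@nu_spec _ _ _ _ y pz).
have hA : mu h1 \in Aut H by apply: (subsetP sGA); apply: mem_morphim.
rewrite morphM // permM e1 (@aut_expg _ H _ _ _ hA tH).
rewrite e2; apply/eqP; symmetry; exact: expgM.
Qed.
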